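(* Let $w_1, w_2 \geq 0$ with $w_1 + w_2 > 0$. Both for the class of sequential two-player weighted congestion games with affine costs, uniform cost functions and player weights $w_1,w_2$ (player 1 moving first), and for its subclass of network routing games, the price of anarchy (with respect to subgame-perfect equilibria) is equal to \begin{enumerate} \item[(a)] $1 + \frac{w_1}{w_1 + w_2}$ if $w_2 \leq w_1$; \item[(b)] $1 + \frac{2w_1w_2}{2w_1^2 + w_1w_2 + w_2^2}$ if $w_1 \leq w_2 \leq 2w_1$; \item[(c)] $1 + \frac{w_2}{2w_1+w_2}$ if $w_2 \geq 2w_1$. \end{enumerate} Moreover, in each case the value is attained by the following network routing game (all $\alpha=0$; $\beta$ given per arc): in case (a): arcs $a\to c$ ($\beta=w_2$), $b\to d$ ($\beta=w_1+w_2$), $a\to b$ ($\beta=0$), $b\to c$ ($\beta=w_2$), $c\to d$ ($\beta=0$), player 1 from $a$ to $c$, player 2 from $b$ to $d$; in case (b): arcs $a\to b$ ($0$), $b\to c$ ($w_1w_2$), $a\to c$ ($w_1^2+w_1w_2$), $c\to d$ ($w_2^2$), $d\to e$ ($0$), $c\to e$ ($0$), $a\to d$ ($(w_1+w_2)^2$), player 1 from $b$ to $e$, player 2 from $a$ to $d$; in case (c): arcs $a\to b$ ($w_2$), $b\to c$ ($0$), $a\to c$ ($w_1+w_2$), player 1 from $a$ to $b$, player 2 from $a$ to $c$.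
   Context: A weighted two-player congestion game with affine costs consists of a finite set $R$ of resources, coefficients $\alpha_r,\beta_r \geq 0$ for each $r\in R$, two players $i=1,2$ with weights $w_i\ge 0$, and for each player $i$ a nonempty finite set $\mathcal{A}_i \subseteq 2^R$ of actions. For an action profile $A=(A_1,A_2)$ the load of $r$ is $x_r(A)=\sum_{j:\, r\in A_j} w_j$. With uniform costs, player $i$ pays $C_i(A)=\sum_{r\in A_i}(\alpha_r+\beta_r x_r(A))$. The social cost is $C(A)=C_1(A)+C_2(A)$. In a network routing game, $R$ is the arc set of a directed graph, player $i$ has a source $s_i$ and sink $t_i$, and $\mathcal{A}_i$ is the set of arc sets of directed $s_i$–$t_i$ paths. In the sequential game, player 1 (weight $w_1$) chooses $A_1\in\mathcal{A}_1$ first, then player 2 (weight $w_2$), knowing $A_1$, chooses $A_2\in\mathcal{A}_2$. A subgame-perfect equilibrium consists of a function $A_1\mapsto A_2^*(A_1)$ with $C_2(A_1,A_2^*(A_1))\le C_2(A_1,A_2)$ for all $A_1,A_2$, and an action $A_1^*$ with $C_1(A_1^*,A_2^*(A_1^* ))\le C_1(A_1,A_2^*(A_1))$ for all $A_1$; its outcome is $(A_1^*,A_2^*(A_1^* ))$. The price of anarchy of an instance is the maximum over subgame-perfect equilibrium outcomes $A$ of $C(A)/\min_{A'}C(A')$; the price of anarchy of a class is the supremum over all instances (with positive optimal social cost). *)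

(* Defs.v *)
From mathcomp Require Import all_boot all_order all_algebra.
Set Implicit Arguments. Unset Strict Implicit. Unset Printing Implicit Defensive.
Import Order.TTheory GRing.Theory Num.Theory.
Local Open Scope ring_scope.

Section Game.
Variables (R : realFieldType) (T : finType).
Variables (alpha beta : T -> R) (w1 w2 : R).
Variables (S1 S2 : {set {set T}}).

Definition load (A1 A2 : {set T}) (r : T) : R :=
  (if r \in A1 then w1 else 0) + (if r \in A2 then w2 else 0).

Definition cost1 (A1 A2 : {set T}) : R :=
  \sum_(r in A1) (alpha r + beta r * load A1 A2 r).
Definition cost2 (A1 A2 : {set T}) : R :=
  \sum_(r in A2) (alpha r + beta r * load A1 A2 r).
Definition social_cost (A1 A2 : {set T}) : R := cost1 A1 A2 + cost2 A1 A2.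

Definition is_opt_cost (v : R) : Prop :=
  (exists2 A1, A1 \in S1 & exists2 A2, A2 \in S2 & social_cost A1 A2 = v) /\
  (forall A1 A2, A1 \in S1 -> A2 \in S2 -> v <= social_cost A1 A2).

(* (f, A1s) is a subgame-perfect equilibrium: f is player 2's strategy
   (a best response to every action of player 1), A1s is player 1's action *)
Definition is_spe (f : {set T} -> {set T}) (A1s : {set T}) : Prop :=
  (forall A1, A1 \in S1 -> f A1 \in S2 /\
     forall A2, A2 \in S2 -> cost2 A1 (f A1) <= cost2 A1 A2) /\
  A1s \in S1 /\
  (forall A1, A1 \in S1 -> cost1 A1s (f A1s) <= cost1 A1 (f A1)).

Definition is_spe_outcome (A1 A2 : {set T}) : Prop :=
  exists f, is_spe f A1 /\ A2 = f A1.

Definition spe_ratio (x : R) : Prop :=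
  exists A1 A2 v, is_spe_outcome A1 A2 /\ is_opt_cost v /\ 0 < v /\
                  x = social_cost A1 A2 / v.

Definition instance_poa (rho : R) : Prop :=
  spe_ratio rho /\ (forall x, spe_ratio x -> x <= rho).
End Game.

Section Network.
Variables (V T : finType) (tail head : T -> V).

Fixpoint is_walk (s t : V) (p : seq T) : bool :=
  match p with
  | [::] => s == t
  | e :: p' => (tail e == s) && is_walk (head e) t p'
  end.

Definition is_path (s t : V) (p : seq T) : bool :=
  is_walk s t p && uniq (s :: map head p).

Definition path_sets (s t : V) : {set {set T}} :=
  [set A : {set T} | [exists p : (#|T|).-tuple T, exists k : 'I_(#|T|).+1,
      is_path s t (take k p) && (A == [set e in take k p])]].
End Network.

Definition cg_ratio (R : realFieldType) (w1 w2 : R) (x : R) : Prop :=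
  exists (T : finType) (alpha beta : T -> R) (S1 S2 : {set {set T}}),
    (forall r, 0 <= alpha r) /\ (forall r, 0 <= beta r) /\
    S1 != set0 /\ S2 != set0 /\ spe_ratio alpha beta w1 w2 S1 S2 x.

Definition net_ratio (R : realFieldType) (w1 w2 : R) (x : R) : Prop :=
  exists (V T : finType) (tail head : T -> V) (s1 t1 s2 t2 : V)
         (alpha beta : T -> R),
    (forall r, 0 <= alpha r) /\ (forall r, 0 <= beta r) /\
    path_sets tail head s1 t1 != set0 /\ path_sets tail head s2 t2 != set0 /\
    spe_ratio alpha beta w1 w2 (path_sets tail head s1 t1)
              (path_sets tail head s2 t2) x.

Definition is_sup (R : realFieldType) (P : R -> Prop) (rho : R) : Prop :=
  (forall x, P x -> x <= rho) /\
  (forall y, (forall x, P x -> x <= y) -> rho <= y).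

Definition arc_of (n m : nat) (l : seq nat) (e : 'I_n) : 'I_m.+1 :=
  inord (nth 0%N l e).

(* case (a): vertices a,b,c,d = 0,1,2,3; arcs
   0: a->c (w2), 1: b->d (w1+w2), 2: a->b (0), 3: b->c (w2), 4: c->d (0) *)
Definition tailA : 'I_5 -> 'I_4 := arc_of 3 [:: 0; 1; 0; 1; 2]%N.
Definition headA : 'I_5 -> 'I_4 := arc_of 3 [:: 2; 3; 1; 2; 3]%N.
Definition betaA (R : realFieldType) (w1 w2 : R) (e : 'I_5) : R :=
  nth 0 [:: w2; w1 + w2; 0; w2; 0] e.

(* case (b): vertices a,b,c,d,e = 0..4; arcs
   0: a->b (0), 1: b->c (w1 w2), 2: a->c (w1^2 + w1 w2), 3: c->d (w2^2),
   4: d->e (0), 5: c->e (0), 6: a->d ((w1+w2)^2) *)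
Definition tailB : 'I_7 -> 'I_5 := arc_of 4 [:: 0; 1; 0; 2; 3; 2; 0]%N.
Definition headB : 'I_7 -> 'I_5 := arc_of 4 [:: 1; 2; 2; 3; 4; 4; 3]%N.
Definition betaB (R : realFieldType) (w1 w2 : R) (e : 'I_7) : R :=
  nth 0 [:: 0; w1 * w2; w1 ^+ 2 + w1 * w2; w2 ^+ 2; 0; 0; (w1 + w2) ^+ 2] e.

(* case (c): vertices a,b,c = 0,1,2; arcs
   0: a->b (w2), 1: b->c (0), 2: a->c (w1+w2) *)
Definition tailC : 'I_3 -> 'I_3 := arc_of 2 [:: 0; 1; 0]%N.
Definition headC : 'I_3 -> 'I_3 := arc_of 2 [:: 1; 2; 2]%N.
Definition betaC (R : realFieldType) (w1 w2 : R) (e : 'I_3) : R :=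
  nth 0 [:: w2; 0; w1 + w2] e.

Definition vtx (m k : nat) : 'I_m.+1 := inord k.

(* Main.v *)
Require Import Defs.
From mathcomp Require Import all_boot all_order all_algebra.
From mathcomp Require Import ring lra.
Set Implicit Arguments. Unset Strict Implicit. Unset Printing Implicit Defensive.
Import Order.TTheory GRing.Theory Num.Theory.
Local Open Scope ring_scope.

(* Proof: an LP-style per-resource certificate for the upper
   bound (lemma key + condA/condB/condC), and explicit SPE computations for the
   three example networks (plus a w2 = 0 variant of network A). *)



Section General.
Variables (R : realFieldType) (T : finType) (alpha beta : T -> R) (w1 w2 : R).

Definition ind (b : bool) : R := if b then 1 else 0.

Lemma cost1E A1 A2 : cost1 alpha beta w1 w2 A1 A2 =
  \sum_r (alpha r * ind (r \in A1) +
          beta r * (ind (r \in A1) * (w1 * ind (r \in A1) + w2 * ind (r \in A2)))).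
Proof.
rewrite /cost1 big_mkcond /=; apply: eq_bigr => r _.
rewrite /load /ind; case: (r \in A1); case: (r \in A2); ring.
Qed.

Lemma cost2E A1 A2 : cost2 alpha beta w1 w2 A1 A2 =
  \sum_r (alpha r * ind (r \in A2) +
          beta r * (ind (r \in A2) * (w1 * ind (r \in A1) + w2 * ind (r \in A2)))).
Proof.
rewrite /cost2 big_mkcond /=; apply: eq_bigr => r _.
rewrite /load /ind; case: (r \in A1); case: (r \in A2); ring.
Qed.

Definition Ga (P Q l1 mO mB nO a1 a2 o1 o2 b : R) : R :=
  P*(a1 + a2) - Q*(o1+o2) - l1*(a1 - o1) - mO*(a2 - o2) - mB*(a2 - b) - nO*(b - o2).

Definition Gb (P Q l1 mO mB nO a1 a2 o1 o2 b : R) : R :=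
  let c1 x1 x2 := x1 * (w1 * x1 + w2 * x2) in
  let c2 x1 x2 := x2 * (w1 * x1 + w2 * x2) in
  P*(c1 a1 a2 + c2 a1 a2) - Q*(c1 o1 o2 + c2 o1 o2) - l1*(c1 a1 a2 - c1 o1 b)
  - mO*(c2 a1 a2 - c2 a1 o2) - mB*(c2 a1 a2 - c2 a1 b) - nO*(c2 o1 b - c2 o1 o2).

Lemma key (P Q l1 mO mB nO : R) A1 A2 O1 O2 B :
  (forall r, 0 <= alpha r) -> (forall r, 0 <= beta r) ->
  0 <= l1 -> 0 <= mO -> 0 <= mB -> 0 <= nO ->
  (forall a1 a2 o1 o2 b : bool,
     Ga P Q l1 mO mB nO (ind a1) (ind a2) (ind o1) (ind o2) (ind b) <= 0 /\
     Gb P Q l1 mO mB nO (ind a1) (ind a2) (ind o1) (ind o2) (ind b) <= 0) ->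
  cost1 alpha beta w1 w2 A1 A2 <= cost1 alpha beta w1 w2 O1 B ->
  cost2 alpha beta w1 w2 A1 A2 <= cost2 alpha beta w1 w2 A1 O2 ->
  cost2 alpha beta w1 w2 A1 A2 <= cost2 alpha beta w1 w2 A1 B ->
  cost2 alpha beta w1 w2 O1 B <= cost2 alpha beta w1 w2 O1 O2 ->
  P * social_cost alpha beta w1 w2 A1 A2 <= Q * social_cost alpha beta w1 w2 O1 O2.
Proof.
move=> ha hb hl1 hmO hmB hnO hG I1 I2 I3 I4.
have H : P * social_cost alpha beta w1 w2 A1 A2 - Q * social_cost alpha beta w1 w2 O1 O2
  - l1 * (cost1 alpha beta w1 w2 A1 A2 - cost1 alpha beta w1 w2 O1 B)
  - mO * (cost2 alpha beta w1 w2 A1 A2 - cost2 alpha beta w1 w2 A1 O2)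
  - mB * (cost2 alpha beta w1 w2 A1 A2 - cost2 alpha beta w1 w2 A1 B)
  - nO * (cost2 alpha beta w1 w2 O1 B - cost2 alpha beta w1 w2 O1 O2) <= 0.
  rewrite /social_cost !cost1E !cost2E.
  rewrite -!big_split /= !mulr_sumr -!sumrB /=.
  rewrite !mulr_sumr -!sumrB. apply: sumr_le0 => r _.
  have [h1 h2] := hG (r \in A1) (r \in A2) (r \in O1) (r \in O2) (r \in B).
  have e : forall x y : R, x = y -> x <= 0 -> y <= 0 by move=> x y ->.
  apply: (e (alpha r * Ga P Q l1 mO mB nO (ind (r \in A1)) (ind (r \in A2)) (ind (r \in O1)) (ind (r \in O2)) (ind (r \in B))
           + beta r * Gb P Q l1 mO mB nO (ind (r \in A1)) (ind (r \in A2)) (ind (r \in O1)) (ind (r \in O2)) (ind (r \in B)))).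
    rewrite /Ga /Gb /=; ring.
  have := mulr_ge0_le0 (ha r) h1; have := mulr_ge0_le0 (hb r) h2; lra.
have t1 : 0 <= l1 * (cost1 alpha beta w1 w2 O1 B - cost1 alpha beta w1 w2 A1 A2).
  by apply: mulr_ge0 => //; rewrite subr_ge0.
have t2 : 0 <= mO * (cost2 alpha beta w1 w2 A1 O2 - cost2 alpha beta w1 w2 A1 A2).
  by apply: mulr_ge0 => //; rewrite subr_ge0.
have t3 : 0 <= mB * (cost2 alpha beta w1 w2 A1 B - cost2 alpha beta w1 w2 A1 A2).
  by apply: mulr_ge0 => //; rewrite subr_ge0.
have t4 : 0 <= nO * (cost2 alpha beta w1 w2 O1 O2 - cost2 alpha beta w1 w2 O1 B).
  by apply: mulr_ge0 => //; rewrite subr_ge0.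
move: H t1 t2 t3 t4.
set a := P * _; set b := Q * _; set c1 := cost1 _ _ _ _ _ _; set c2 := cost1 _ _ _ _ _ _.
set d1 := cost2 _ _ _ _ A1 A2; set d2 := cost2 _ _ _ _ A1 O2; set d3 := cost2 _ _ _ _ A1 B.
set d4 := cost2 _ _ _ _ O1 B; set d5 := cost2 _ _ _ _ O1 O2.
set e1 := l1 * _; set e2 := l1 * _.
move=> H t1 t2 t3 t4.
have : e2 = - e1 by rewrite /e1 /e2 -mulrN opprB.
move: H t1 t2 t3 t4; set f1 := mO * _; set f2 := mO * _; set g1 := mB * _; set g2 := mB * _;
  set h1 := nO * _; set h2 := nO * _.
move=> H t1 t2 t3 t4 E1.
have E2 : f2 = - f1 by rewrite /f1 /f2 -mulrN opprB.
have E3 : g2 = - g1 by rewrite /g1 /g2 -mulrN opprB.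
have E4 : h2 = - h1 by rewrite /h1 /h2 -mulrN opprB.
lra.
Qed.

End General.
Arguments ind {R} b.



Lemma condA (R : realFieldType) (w1 w2 : R) : 0 <= w1 -> 0 <= w2 -> w2 <= w1 ->
  forall a1 a2 o1 o2 b : bool,
  Ga (w1+w2) (2*w1+w2) (2*w1+w2) w1 w2 (w1+w2) (ind a1) (ind a2) (ind o1) (ind o2) (ind b) <= 0 /\
  Gb w1 w2 (w1+w2) (2*w1+w2) (2*w1+w2) w1 w2 (w1+w2) (ind a1) (ind a2) (ind o1) (ind o2) (ind b) <= 0.
Proof.
move=> h1 h2 h12 a1 a2 o1 o2 b.
have h3 := mulr_ge0 h1 h2; have h4 := mulr_ge0 h1 h1; have h5 := mulr_ge0 h2 h2.
have h6 : 0 <= w1 * (w1 - w2) by apply: mulr_ge0 => //; lra.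
have h7 : 0 <= w2 * (w1 - w2) by apply: mulr_ge0 => //; lra.
case: a1; case: a2; case: o1; case: o2; case: b; rewrite /Ga /Gb /ind /=; split; nra.
Qed.

Lemma condB (R : realFieldType) (w1 w2 : R) : 0 <= w1 -> 0 <= w2 -> w1 <= w2 -> w2 <= 2 * w1 ->
  let D := 2 * w1 ^+ 2 + w1 * w2 + w2 ^+ 2 in
  forall a1 a2 o1 o2 b : bool,
  Ga D (D + 2*w1*w2) (4*w1^+2+2*w1*w2) ((2*w1-w2)*(w1+w2)) (2*w2^+2) (2*w1*w2+2*w2^+2) (ind a1) (ind a2) (ind o1) (ind o2) (ind b) <= 0 /\
  Gb w1 w2 D (D + 2*w1*w2) (4*w1^+2+2*w1*w2) ((2*w1-w2)*(w1+w2)) (2*w2^+2) (2*w1*w2+2*w2^+2) (ind a1) (ind a2) (ind o1) (ind o2) (ind b) <= 0.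
Proof.
move=> h1 h2 h12 h21 D a1 a2 o1 o2 b.
have h3 := mulr_ge0 h1 h2; have h4 := mulr_ge0 h1 h1; have h5 := mulr_ge0 h2 h2.
have h6 : 0 <= w1 * (w2 - w1) by apply: mulr_ge0 => //; lra.
have h7 : 0 <= w2 * (w2 - w1) by apply: mulr_ge0 => //; lra.
have h8 : 0 <= w1 * (2*w1 - w2) by apply: mulr_ge0 => //; lra.
have h9 : 0 <= w2 * (2*w1 - w2) by apply: mulr_ge0 => //; lra.
case: a1; case: a2; case: o1; case: o2; case: b; rewrite /D /Ga /Gb /ind /=; split; nra.
Qed.

Lemma condC (R : realFieldType) (w1 w2 : R) : 0 <= w1 -> 0 <= w2 -> 2 * w1 <= w2 ->
  forall a1 a2 o1 o2 b : bool,
  Ga (2*w1+w2) (2*(w1+w2)) (2*w1+w2) 0 (2*w1+w2) (2*(w1+w2)) (ind a1) (ind a2) (ind o1) (ind o2) (ind b) <= 0 /\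
  Gb w1 w2 (2*w1+w2) (2*(w1+w2)) (2*w1+w2) 0 (2*w1+w2) (2*(w1+w2)) (ind a1) (ind a2) (ind o1) (ind o2) (ind b) <= 0.
Proof.
move=> h1 h2 h12 a1 a2 o1 o2 b.
have h3 := mulr_ge0 h1 h2; have h4 := mulr_ge0 h1 h1; have h5 := mulr_ge0 h2 h2.
have h6 : 0 <= w1 * (w2 - 2*w1) by apply: mulr_ge0 => //; lra.
have h7 : 0 <= w2 * (w2 - 2*w1) by apply: mulr_ge0 => //; lra.
case: a1; case: a2; case: o1; case: o2; case: b; rewrite /Ga /Gb /ind /=; split; nra.
Qed.



Section Paths.
Variables (V T : finType) (tail head : T -> V).

Variable es : seq T.
Hypothesis es_full : forall e, e \in es.
Fixpoint walks (n : nat) (s t : V) : seq (seq T) :=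
  (if s == t then [:: [::]] else [::]) ++
  match n with
  | 0 => [::]
  | n'.+1 => flatten [seq [seq e :: q | q <- walks n' (head e) t] | e <- es & tail e == s]
  end.

Lemma walks_complete n : forall q s t, is_walk tail head s t q -> (size q <= n)%N ->
  q \in walks n s t.
Proof.
elim: n => [|n IH] [|e q] s t //=.
all: try (by move=> /eqP ->; rewrite eqxx).
move=> /andP [/eqP hs hw] hsz; rewrite mem_cat; apply/orP; right.
  apply/flatten_mapP; exists e; first by rewrite mem_filter hs eqxx es_full.
  by apply: map_f; apply: IH.
Qed.


Lemma path_sets_mem s t (e0 : T) q : is_path tail head s t q -> (size q <= #|T|)%N ->
  [set e in q] \in path_sets tail head s t.
Proof.
move=> hp hs; rewrite inE; apply/existsP.
pose l := take #|T| (q ++ nseq #|T| e0).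
have hl : size l == #|T|.
  by rewrite size_take_min size_cat size_nseq (minn_idPl (leq_addl _ _)).
exists (Tuple hl); apply/existsP; exists (inord (size q)).
by rewrite /= inordK ?ltnS // take_takel // take_size_cat // hp eqxx.
Qed.
End Paths.

Lemma walk_ext (V T : finType) (tl hd tl' hd' : T -> V) : tl =1 tl' -> hd =1 hd' ->
  forall q s t, is_walk tl hd s t q = is_walk tl' hd' s t q.
Proof. by move=> et eh; elim=> [|e q IH] s t //=; rewrite et eh IH. Qed.


Lemma path_sets_sub' (V T : finType) (tl hd tl' hd' : T -> V) es s t A :
  (forall e, e \in es) ->
  tl =1 tl' -> hd =1 hd' -> A \in path_sets tl hd s t ->
  exists2 q, q \in walks tl' hd' es #|T| s t & A = [set e in q].
Proof.
move=> hes et eh; rewrite inE => /existsP [p /existsP [k /andP [/andP [hw _] /eqP ->]]].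
exists (take k p) => //; apply: (walks_complete hes); first by rewrite -(walk_ext et eh).
by rewrite size_take_min size_tuple geq_minr.
Qed.

Lemma path_sets_mem' (V T : finType) (tl hd tl' hd' : T -> V) s t (e0 : T) q :
  tl =1 tl' -> hd =1 hd' -> is_path tl' hd' s t q -> (size q <= #|T|)%N ->
  [set e in q] \in path_sets tl hd s t.
Proof.
move=> et eh hp hs; apply: (path_sets_mem e0) => //.
move: hp; rewrite /is_path (walk_ext et eh) (eq_map eh) => //.
Qed.

Definition arc' (n m : nat) (l : seq nat) (e : 'I_n) : 'I_m.+1 :=
  Ordinal (ltn_pmod (nth 0%N l e) (ltn0Sn m)).
Definition vtx' (m k : nat) : 'I_m.+1 := Ordinal (ltn_pmod k (ltn0Sn m)).

Lemma arc'E n m l : all (fun k => (k <= m)%N) l -> @arc_of n m l =1 @arc' n m l.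
Proof.
move=> /allP hl e.
have h : (nth 0%N l e < m.+1)%N.
  rewrite ltnS; case: (ltnP e (size l)) => h; first by apply: hl; exact: mem_nth.
  by rewrite nth_default.
by apply: val_inj; rewrite /= inordK ?modn_small.
Qed.

Lemma vtx'E m k : (k <= m)%N -> vtx m k = vtx' m k.
Proof. by move=> h; apply: val_inj; rewrite /= inordK ?modn_small. Qed.

Definition eqmem (T : eqType) (q r : seq T) : bool := all (mem r) q && all (mem q) r.
Lemma eqmemP (T : finType) (q r : seq T) : eqmem q r -> [set e in q] = [set e in r].
Proof.
move=> /andP [/allP h1 /allP h2]; apply/setP => x; rewrite !inE.
by apply/idP/idP => [/h1|/h2].
Qed.




Lemma sumE (R : realFieldType) (T : finType) (q : seq T) (F : T -> R) : uniq q ->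
  \sum_(r in [set e in q]) F r = \sum_(r <- q) F r.
Proof. by move=> hq; rewrite big_uniq //; apply: eq_bigl => r; rewrite inE. Qed.

Lemma set_neq (T : finType) (q r : seq T) x : x \in q -> x \notin r -> ([set e in q] == [set e in r]) = false.
Proof. by move=> h1 h2; apply/eqP => /setP /(_ x); rewrite !inE h1 (negbTE h2). Qed.

Notation E5 k := (@Ordinal 5 k isT).
Definition es5 : seq 'I_5 := [:: E5 0; E5 1; E5 2; E5 3; E5 4].
Lemma es5_full e : e \in es5.
Proof. by case: e => [[|[|[|[|[|k]]]]] hk]. Qed.

Definition tA' := @arc' 5 3 [:: 0; 1; 0; 1; 2]%N.
Definition hA' := @arc' 5 3 [:: 2; 3; 1; 2; 3]%N.
Lemma tAE : tailA =1 tA'. Proof. exact: (@arc'E 5 3 [:: 0; 1; 0; 1; 2]%N isT). Qed.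
Lemma hAE : headA =1 hA'. Proof. exact: (@arc'E 5 3 [:: 2; 3; 1; 2; 3]%N isT). Qed.

Definition qA1a := [:: E5 0]. Definition qA1b := [:: E5 2; E5 3].
Definition qA2a := [:: E5 1]. Definition qA2b := [:: E5 3; E5 4].
Definition SA1 := path_sets tailA headA (vtx 3 0) (vtx 3 2).
Definition SA2 := path_sets tailA headA (vtx 3 1) (vtx 3 3).

Lemma SA1_char A : A \in SA1 -> A = [set e in qA1a] \/ A = [set e in qA1b].
Proof.
rewrite /SA1 !vtx'E // => /(path_sets_sub' es5_full tAE hAE) [q hq ->].
rewrite card_ord in hq.
have : all (fun q => eqmem q qA1a || eqmem q qA1b) (walks tA' hA' es5 5 (vtx' 3 0) (vtx' 3 2)) by vm_compute.
by move=> /allP /(_ q hq) /orP [] /eqmemP ->; [left|right].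
Qed.
Lemma SA2_char A : A \in SA2 -> A = [set e in qA2a] \/ A = [set e in qA2b].
Proof.
rewrite /SA2 !vtx'E // => /(path_sets_sub' es5_full tAE hAE) [q hq ->].
rewrite card_ord in hq.
have : all (fun q => eqmem q qA2a || eqmem q qA2b) (walks tA' hA' es5 5 (vtx' 3 1) (vtx' 3 3)) by vm_compute.
by move=> /allP /(_ q hq) /orP [] /eqmemP ->; [left|right].
Qed.
Lemma SA1a_mem : [set e in qA1a] \in SA1.
Proof. by rewrite /SA1 !vtx'E //; apply: (path_sets_mem' (E5 0) tAE hAE); rewrite ?card_ord; vm_compute. Qed.
Lemma SA1b_mem : [set e in qA1b] \in SA1.
Proof. by rewrite /SA1 !vtx'E //; apply: (path_sets_mem' (E5 0) tAE hAE); rewrite ?card_ord; vm_compute. Qed.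
Lemma SA2a_mem : [set e in qA2a] \in SA2.
Proof. by rewrite /SA2 !vtx'E //; apply: (path_sets_mem' (E5 0) tAE hAE); rewrite ?card_ord; vm_compute. Qed.
Lemma SA2b_mem : [set e in qA2b] \in SA2.
Proof. by rewrite /SA2 !vtx'E //; apply: (path_sets_mem' (E5 0) tAE hAE); rewrite ?card_ord; vm_compute. Qed.

Ltac cst := rewrite /social_cost /cost1 /cost2 ?sumE // ?big_cons ?big_nil /load ?inE /=.

Section InstA.
Variables (R : realFieldType) (w1 w2 : R) (al be : 'I_5 -> R).

Definition fA (X : {set 'I_5}) := if X == [set e in qA1a] then [set e in qA2b] else [set e in qA2a].

Lemma instA_gen (x v : R) (A1s : seq 'I_5) (A2s : seq 'I_5) :
  True.
Proof. by []. Qed.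
End InstA.

Lemma instA (R : realFieldType) (w1 w2 : R) : 0 < w2 -> w2 <= w1 ->
  spe_ratio (fun _ => 0) (betaA w1 w2) w1 w2 SA1 SA2 (1 + w1 / (w1 + w2)).
Proof.
move=> h2 h12.
have hA : fA [set e in qA1a] = [set e in qA2b] by rewrite /fA eqxx.
have hB : fA [set e in qA1b] = [set e in qA2a].
  by rewrite /fA (@set_neq _ _ _ (E5 2)).
exists [set e in qA1b], [set e in qA2a], (social_cost (fun _ => 0) (betaA w1 w2) w1 w2 [set e in qA1a] [set e in qA2b]).
split; [|split; [|split]].
- exists fA; split=> //; split; [|split; first exact: SA1b_mem].
  + move=> A1 /SA1_char [] ->; rewrite ?hA ?hB; (split; [exact: SA2a_mem || exact: SA2b_mem|]);
    move=> A2 /SA2_char [] ->; cst; rewrite /betaA /=; nra.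
  + move=> A1 /SA1_char [] ->; rewrite ?hA ?hB; cst; rewrite /betaA /=; nra.
- split; first by exists [set e in qA1a]; [exact: SA1a_mem|exists [set e in qA2b]; [exact: SA2b_mem|]].
  move=> A1 A2 /SA1_char [] -> /SA2_char [] ->; cst; rewrite /betaA /=; nra.
- cst; rewrite /betaA /=; have := mulr_gt0 h2 h2; have := mulr_ge0 (ltW h2) (le_trans (ltW h2) h12); lra.
- cst; rewrite /betaA /=; field; have := mulr_gt0 h2 h2; have := mulr_ge0 (ltW h2) (le_trans (ltW h2) h12); move=> *; apply/andP; split; apply: lt0r_neq0; lra.
Qed.



Notation E7 k := (@Ordinal 7 k isT).
Definition es7 : seq 'I_7 := [:: E7 0; E7 1; E7 2; E7 3; E7 4; E7 5; E7 6].
Lemma es7_full e : e \in es7.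
Proof. by case: e => [[|[|[|[|[|[|[|k]]]]]]] hk]. Qed.

Definition tB' := @arc' 7 4 [:: 0; 1; 0; 2; 3; 2; 0]%N.
Definition hB' := @arc' 7 4 [:: 1; 2; 2; 3; 4; 4; 3]%N.
Lemma tBE : tailB =1 tB'. Proof. exact: (@arc'E 7 4 [:: 0; 1; 0; 2; 3; 2; 0]%N isT). Qed.
Lemma hBE : headB =1 hB'. Proof. exact: (@arc'E 7 4 [:: 1; 2; 2; 3; 4; 4; 3]%N isT). Qed.

Definition qB1a := [:: E7 1; E7 5]. Definition qB1b := [:: E7 1; E7 3; E7 4].
Definition qB2a := [:: E7 6]. Definition qB2b := [:: E7 0; E7 1; E7 3].
Definition qB2c := [:: E7 2; E7 3].
Definition SB1 := path_sets tailB headB (vtx 4 1) (vtx 4 4).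
Definition SB2 := path_sets tailB headB (vtx 4 0) (vtx 4 3).

Lemma SB1_char A : A \in SB1 -> A = [set e in qB1a] \/ A = [set e in qB1b].
Proof.
rewrite /SB1 !vtx'E // => /(path_sets_sub' es7_full tBE hBE) [q hq ->].
rewrite card_ord in hq.
have : all (fun q => eqmem q qB1a || eqmem q qB1b) (walks tB' hB' es7 7 (vtx' 4 1) (vtx' 4 4)) by vm_compute.
by move=> /allP /(_ q hq) /orP [] /eqmemP ->; [left|right].
Qed.
Lemma SB2_char A : A \in SB2 ->
  [\/ A = [set e in qB2a], A = [set e in qB2b] | A = [set e in qB2c]].
Proof.
rewrite /SB2 !vtx'E // => /(path_sets_sub' es7_full tBE hBE) [q hq ->].
rewrite card_ord in hq.
have : all (fun q => [|| eqmem q qB2a, eqmem q qB2b | eqmem q qB2c])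
  (walks tB' hB' es7 7 (vtx' 4 0) (vtx' 4 3)) by vm_compute.
by move=> /allP /(_ q hq) /or3P [] /eqmemP ->; [apply: Or31|apply: Or32|apply: Or33].
Qed.
Lemma SB1a_mem : [set e in qB1a] \in SB1.
Proof. by rewrite /SB1 !vtx'E //; apply: (path_sets_mem' (E7 0) tBE hBE); rewrite ?card_ord; vm_compute. Qed.
Lemma SB1b_mem : [set e in qB1b] \in SB1.
Proof. by rewrite /SB1 !vtx'E //; apply: (path_sets_mem' (E7 0) tBE hBE); rewrite ?card_ord; vm_compute. Qed.
Lemma SB2a_mem : [set e in qB2a] \in SB2.
Proof. by rewrite /SB2 !vtx'E //; apply: (path_sets_mem' (E7 0) tBE hBE); rewrite ?card_ord; vm_compute. Qed.
Lemma SB2b_mem : [set e in qB2b] \in SB2.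
Proof. by rewrite /SB2 !vtx'E //; apply: (path_sets_mem' (E7 0) tBE hBE); rewrite ?card_ord; vm_compute. Qed.
Lemma SB2c_mem : [set e in qB2c] \in SB2.
Proof. by rewrite /SB2 !vtx'E //; apply: (path_sets_mem' (E7 0) tBE hBE); rewrite ?card_ord; vm_compute. Qed.

Definition fB (X : {set 'I_7}) := if X == [set e in qB1a] then [set e in qB2b] else [set e in qB2a].

Lemma instB (R : realFieldType) (w1 w2 : R) : 0 < w1 -> 0 < w2 ->
  spe_ratio (fun _ => 0) (betaB w1 w2) w1 w2 SB1 SB2
    (1 + 2 * w1 * w2 / (2 * w1 ^+ 2 + w1 * w2 + w2 ^+ 2)).
Proof.
move=> h1 h2.
have hA : fB [set e in qB1a] = [set e in qB2b] by rewrite /fB eqxx.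
have hB : fB [set e in qB1b] = [set e in qB2a].
  by rewrite /fB (@set_neq _ _ _ (E7 3)).
have p1 := mulr_gt0 h1 h2; have p2 := mulr_gt0 h1 h1; have p3 := mulr_gt0 h2 h2.
have p4 := mulr_gt0 p1 h2; have p5 := mulr_gt0 p2 h2; have p6 := mulr_gt0 p3 h2.
have p7 := mulr_gt0 p1 h1.
exists [set e in qB1b], [set e in qB2a], (social_cost (fun _ => 0) (betaB w1 w2) w1 w2 [set e in qB1a] [set e in qB2c]).
split; [|split; [|split]].
- exists fB; split=> //; split; [|split; first exact: SB1b_mem].
  + move=> A1 /SB1_char [] ->; rewrite ?hA ?hB; (split; [exact: SB2a_mem || exact: SB2b_mem|]);
    move=> A2 /SB2_char [] ->; cst; rewrite /betaB /=; nra.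
  + move=> A1 /SB1_char [] ->; rewrite ?hA ?hB; cst; rewrite /betaB /=; nra.
- split; first by exists [set e in qB1a]; [exact: SB1a_mem|exists [set e in qB2c]; [exact: SB2c_mem|]].
  move=> A1 A2 /SB1_char [] -> /SB2_char [] ->; cst; rewrite /betaB /=; nra.
- cst; rewrite /betaB /=; nra.
- cst; rewrite /betaB /=; field; apply/andP; split; apply: lt0r_neq0; nra.
Qed.



Notation E3 k := (@Ordinal 3 k isT).
Definition es3 : seq 'I_3 := [:: E3 0; E3 1; E3 2].
Lemma es3_full e : e \in es3.
Proof. by case: e => [[|[|[|k]]] hk]. Qed.

Definition tC' := @arc' 3 2 [:: 0; 1; 0]%N.
Definition hC' := @arc' 3 2 [:: 1; 2; 2]%N.
Lemma tCE : tailC =1 tC'. Proof. exact: (@arc'E 3 2 [:: 0; 1; 0]%N isT). Qed.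
Lemma hCE : headC =1 hC'. Proof. exact: (@arc'E 3 2 [:: 1; 2; 2]%N isT). Qed.

Definition qC1 := [:: E3 0].
Definition qC2a := [:: E3 0; E3 1]. Definition qC2b := [:: E3 2].
Definition SC1 := path_sets tailC headC (vtx 2 0) (vtx 2 1).
Definition SC2 := path_sets tailC headC (vtx 2 0) (vtx 2 2).

Lemma SC1_char A : A \in SC1 -> A = [set e in qC1].
Proof.
rewrite /SC1 !vtx'E // => /(path_sets_sub' es3_full tCE hCE) [q hq ->].
rewrite card_ord in hq.
have : all (fun q => eqmem q qC1) (walks tC' hC' es3 3 (vtx' 2 0) (vtx' 2 1)) by vm_compute.
by move=> /allP /(_ q hq) /eqmemP ->.
Qed.
Lemma SC2_char A : A \in SC2 -> A = [set e in qC2a] \/ A = [set e in qC2b].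
Proof.
rewrite /SC2 !vtx'E // => /(path_sets_sub' es3_full tCE hCE) [q hq ->].
rewrite card_ord in hq.
have : all (fun q => eqmem q qC2a || eqmem q qC2b) (walks tC' hC' es3 3 (vtx' 2 0) (vtx' 2 2)) by vm_compute.
by move=> /allP /(_ q hq) /orP [] /eqmemP ->; [left|right].
Qed.
Lemma SC1_mem : [set e in qC1] \in SC1.
Proof. by rewrite /SC1 !vtx'E //; apply: (path_sets_mem' (E3 0) tCE hCE); rewrite ?card_ord; vm_compute. Qed.
Lemma SC2a_mem : [set e in qC2a] \in SC2.
Proof. by rewrite /SC2 !vtx'E //; apply: (path_sets_mem' (E3 0) tCE hCE); rewrite ?card_ord; vm_compute. Qed.
Lemma SC2b_mem : [set e in qC2b] \in SC2.
Proof. by rewrite /SC2 !vtx'E //; apply: (path_sets_mem' (E3 0) tCE hCE); rewrite ?card_ord; vm_compute. Qed.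

Lemma instC (R : realFieldType) (w1 w2 : R) : 0 <= w1 -> 0 < w2 ->
  spe_ratio (fun _ => 0) (betaC w1 w2) w1 w2 SC1 SC2 (1 + w2 / (2 * w1 + w2)).
Proof.
move=> h1 h2.
have p1 := mulr_ge0 h1 (ltW h2); have p3 := mulr_gt0 h2 h2.
exists [set e in qC1], [set e in qC2a], (social_cost (fun _ => 0) (betaC w1 w2) w1 w2 [set e in qC1] [set e in qC2b]).
split; [|split; [|split]].
- exists (fun _ => [set e in qC2a]); split=> //; split; [|split; first exact: SC1_mem].
  + move=> A1 /SC1_char ->; split; first exact: SC2a_mem.
    move=> A2 /SC2_char [] ->; cst; rewrite /betaC /=; nra.
  + move=> A1 /SC1_char ->; lra.
- split; first by exists [set e in qC1]; [exact: SC1_mem|exists [set e in qC2b]; [exact: SC2b_mem|]].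
  move=> A1 A2 /SC1_char -> /SC2_char [] ->; cst; rewrite /betaC /=; nra.
- cst; rewrite /betaC /=; nra.
- cst; rewrite /betaC /=; field; apply/andP; split; apply: lt0r_neq0; nra.
Qed.

Definition alA0 (R : realFieldType) (w1 : R) (e : 'I_5) : R := nth 0 [:: 0; w1; 0; 0; 0] e.
Definition beA0 (R : realFieldType) (e : 'I_5) : R := nth 0 [:: 1; 0; 0; 1; 0] e.

Lemma instA0 (R : realFieldType) (w1 : R) : 0 < w1 ->
  spe_ratio (alA0 w1) (@beA0 R) w1 0 SA1 SA2 2.
Proof.
move=> h1.
exists [set e in qA1b], [set e in qA2b], (social_cost (alA0 w1) (@beA0 R) w1 0 [set e in qA1a] [set e in qA2b]).
split; [|split; [|split]].
- exists (fun _ => [set e in qA2b]); split=> //; split; [|split; first exact: SA1b_mem].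
  + move=> A1 /SA1_char [] ->; (split; first exact: SA2b_mem);
    move=> A2 /SA2_char [] ->; cst; rewrite /alA0 /beA0 /=; lra.
  + move=> A1 /SA1_char [] ->; cst; rewrite /alA0 /beA0 /=; lra.
- split; first by exists [set e in qA1a]; [exact: SA1a_mem|exists [set e in qA2b]; [exact: SA2b_mem|]].
  move=> A1 A2 /SA1_char [] -> /SA2_char [] ->; cst; rewrite /alA0 /beA0 /=; lra.
- cst; rewrite /alA0 /beA0 /=; lra.
- cst; rewrite /alA0 /beA0 /=; field; apply: lt0r_neq0; lra.
Qed.



Definition condG (R : realFieldType) (w1 w2 P Q l1 mO mB nO : R) :=
  forall a1 a2 o1 o2 b : bool,
     Ga P Q l1 mO mB nO (ind a1) (ind a2) (ind o1) (ind o2) (ind b) <= 0 /\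
     Gb w1 w2 P Q l1 mO mB nO (ind a1) (ind a2) (ind o1) (ind o2) (ind b) <= 0.

Lemma spe_bound (R : realFieldType) (T : finType) (alpha beta : T -> R) (w1 w2 : R)
  (S1 S2 : {set {set T}}) (P Q l1 mO mB nO x : R) :
  (forall r, 0 <= alpha r) -> (forall r, 0 <= beta r) -> 0 < P ->
  0 <= l1 -> 0 <= mO -> 0 <= mB -> 0 <= nO -> condG w1 w2 P Q l1 mO mB nO ->
  spe_ratio alpha beta w1 w2 S1 S2 x -> x <= Q / P.
Proof.
move=> ha hb hP hl hmO hmB hnO hc [A1 [A2 [v [[f [[hf [hA1 h1]] ->]] [[[O1 hO1 [O2 hO2 eO]] hmin] [hv ->]]]]]].
have [hB hBr] := hf O1 hO1; have [hA2 hA2r] := hf A1 hA1.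
have K := key ha hb hl hmO hmB hnO hc (h1 O1 hO1) (hA2r O2 hO2) (hA2r _ hB) (hBr O2 hO2).
rewrite eO in K.
rewrite ler_pdivlMr // mulrAC ler_pdivrMr // mulrC.
exact: K.
Qed.

Lemma class_bound (R : realFieldType) (w1 w2 P Q l1 mO mB nO : R) :
  0 < P -> 0 <= l1 -> 0 <= mO -> 0 <= mB -> 0 <= nO -> condG w1 w2 P Q l1 mO mB nO ->
  (forall x, cg_ratio w1 w2 x -> x <= Q / P) /\ (forall x, net_ratio w1 w2 x -> x <= Q / P).
Proof.
move=> hP hl hmO hmB hnO hc; split => x.
- move=> [T [alpha [beta [S1 [S2 [ha [hb [_ [_ hs]]]]]]]]].
  exact: spe_bound ha hb hP hl hmO hmB hnO hc hs.
- move=> [V [T [tl [hd [s1 [t1 [s2 [t2 [alpha [beta [ha [hb [_ [_ hs]]]]]]]]]]]]]].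
  exact: spe_bound ha hb hP hl hmO hmB hnO hc hs.
Qed.

Lemma sup_of (R : realFieldType) (Pr : R -> Prop) rho :
  (forall x, Pr x -> x <= rho) -> Pr rho -> is_sup Pr rho.
Proof. by move=> h hr; split=> // y hy; apply: hy. Qed.

Lemma betaA_ge0 (R : realFieldType) (w1 w2 : R) : 0 <= w1 -> 0 <= w2 -> forall e, 0 <= betaA w1 w2 e.
Proof. by move=> h1 h2; case=> [[|[|[|[|[|k]]]]] hk]; rewrite /betaA /= ?nth_nil; lra. Qed.
Lemma betaB_ge0 (R : realFieldType) (w1 w2 : R) : 0 <= w1 -> 0 <= w2 -> forall e, 0 <= betaB w1 w2 e.
Proof.
move=> h1 h2; have p1 := mulr_ge0 h1 h2; have p2 := mulr_ge0 h1 h1; have p3 := mulr_ge0 h2 h2.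
by case=> [[|[|[|[|[|[|[|k]]]]]]] hk]; rewrite /betaB /= ?nth_nil ?expr2; nra.
Qed.
Lemma betaC_ge0 (R : realFieldType) (w1 w2 : R) : 0 <= w1 -> 0 <= w2 -> forall e, 0 <= betaC w1 w2 e.
Proof. by move=> h1 h2; case=> [[|[|[|k]]] hk]; rewrite /betaC /= ?nth_nil; lra. Qed.
Lemma alA0_ge0 (R : realFieldType) (w1 : R) : 0 <= w1 -> forall e, 0 <= alA0 w1 e.
Proof. by move=> h1; case=> [[|[|[|[|[|k]]]]] hk]; rewrite /alA0 /= ?nth_nil; lra. Qed.
Lemma beA0_ge0 (R : realFieldType) : forall e, 0 <= @beA0 R e.
Proof. by case=> [[|[|[|[|[|k]]]]] hk]; rewrite /beA0 /= ?nth_nil; lra. Qed.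

Lemma ne0 (T : finType) (S : {set {set T}}) X : X \in S -> S != set0.
Proof. by move=> h; apply/set0Pn; exists X. Qed.

Theorem theorem6 (R : realFieldType) (w1 w2 : R) :
  0 <= w1 -> 0 <= w2 -> 0 < w1 + w2 ->
  (* case (a) *)
  (w2 <= w1 ->
     is_sup (cg_ratio w1 w2) (1 + w1 / (w1 + w2)) /\
     is_sup (net_ratio w1 w2) (1 + w1 / (w1 + w2)) /\
     (0 < w2 ->
      instance_poa (fun _ => 0) (betaA w1 w2) w1 w2
        (path_sets tailA headA (vtx 3 0) (vtx 3 2))
        (path_sets tailA headA (vtx 3 1) (vtx 3 3))
        (1 + w1 / (w1 + w2)))) /\
  (* case (b) *)
  (w1 <= w2 <= 2 * w1 ->
     let rho := 1 + 2 * w1 * w2 / (2 * w1 ^+ 2 + w1 * w2 + w2 ^+ 2) in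
     is_sup (cg_ratio w1 w2) rho /\
     is_sup (net_ratio w1 w2) rho /\
     instance_poa (fun _ => 0) (betaB w1 w2) w1 w2
       (path_sets tailB headB (vtx 4 1) (vtx 4 4))
       (path_sets tailB headB (vtx 4 0) (vtx 4 3))
       rho) /\
  (* case (c) *)
  (2 * w1 <= w2 ->
     is_sup (cg_ratio w1 w2) (1 + w2 / (2 * w1 + w2)) /\
     is_sup (net_ratio w1 w2) (1 + w2 / (2 * w1 + w2)) /\
     instance_poa (fun _ => 0) (betaC w1 w2) w1 w2
       (path_sets tailC headC (vtx 2 0) (vtx 2 1))
       (path_sets tailC headC (vtx 2 0) (vtx 2 2))
       (1 + w2 / (2 * w1 + w2))).
Proof.
move=> h1 h2 h12; split; [|split].
-
  move=> hw.
  have hc := condA h1 h2 hw.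
  have hP : 0 < w1 + w2 by [].
  have E : (2 * w1 + w2) / (w1 + w2) = 1 + w1 / (w1 + w2).
    by field; apply: lt0r_neq0.
  have [U1 U2] := class_bound hP (ltac:(lra) : 0 <= 2*w1+w2) h1 h2 (ltac:(lra) : 0 <= w1+w2) hc.
  rewrite E in U1 U2.
  have att : cg_ratio w1 w2 (1 + w1 / (w1 + w2)) /\ net_ratio w1 w2 (1 + w1 / (w1 + w2)).
    move: (h2); rewrite le_eqVlt => /orP [/eqP w20|w2p].
    + subst w2.
      have w1p : 0 < w1 by lra.
      have -> : 1 + w1 / (w1 + 0) = 2 by field; apply: lt0r_neq0; lra.
      have hs := instA0 w1p.
      split.
      * exists 'I_5, (alA0 w1), (@beA0 R), SA1, SA2.
        by do !split => //; [exact: alA0_ge0|exact: beA0_ge0|exact: ne0 SA1a_mem|exact: ne0 SA2a_mem].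
      * exists 'I_4, 'I_5, tailA, headA, (vtx 3 0), (vtx 3 2), (vtx 3 1), (vtx 3 3), (alA0 w1), (@beA0 R).
        by do !split => //; [exact: alA0_ge0|exact: beA0_ge0|exact: ne0 SA1a_mem|exact: ne0 SA2a_mem].
    + have hs := instA w2p hw.
      split.
      * exists 'I_5, (fun _ => 0), (betaA w1 w2), SA1, SA2.
        by do !split => //; [exact: betaA_ge0|exact: ne0 SA1a_mem|exact: ne0 SA2a_mem].
      * exists 'I_4, 'I_5, tailA, headA, (vtx 3 0), (vtx 3 2), (vtx 3 1), (vtx 3 3), (fun _ => 0), (betaA w1 w2).
        by do !split => //; [exact: betaA_ge0|exact: ne0 SA1a_mem|exact: ne0 SA2a_mem].
  split; first exact: sup_of U1 att.1.
  split; first exact: sup_of U2 att.2.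
  move=> w2p; split; first exact: instA w2p hw.
  move=> x hx; rewrite -E.
  exact: (spe_bound (fun=> lexx 0) (betaA_ge0 h1 h2) hP (ltac:(lra) : 0 <= 2*w1+w2) h1 h2 (ltac:(lra) : 0 <= w1+w2) hc hx).
- move=> /andP [hb1 hb2] rho.
  have w1p : 0 < w1 by lra.
  have w2p : 0 < w2 by lra.
  pose D := 2 * w1 ^+ 2 + w1 * w2 + w2 ^+ 2.
  have hP : 0 < D.
    have := mulr_gt0 w1p w1p; have := mulr_gt0 w1p w2p; have := mulr_gt0 w2p w2p.
    rewrite /D !expr2; lra.
  have hc : condG w1 w2 D (D + 2*w1*w2) (4*w1^+2+2*w1*w2) ((2*w1-w2)*(w1+w2)) (2*w2^+2)
     (2*w1*w2+2*w2^+2) := condB h1 h2 hb1 hb2.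
  have hl : 0 <= 4*w1^+2+2*w1*w2.
    have := mulr_gt0 w1p w1p; have := mulr_gt0 w1p w2p; rewrite !expr2; lra.
  have hmO : 0 <= (2*w1-w2)*(w1+w2) by apply: mulr_ge0; lra.
  have hmB : 0 <= 2*w2^+2 by have := mulr_gt0 w2p w2p; rewrite !expr2; lra.
  have hnO : 0 <= 2*w1*w2+2*w2^+2.
    have := mulr_gt0 w1p w2p; have := mulr_gt0 w2p w2p; rewrite !expr2; lra.
  have E : (D + 2*w1*w2) / D = rho by rewrite /rho /D; field; apply: lt0r_neq0.
  have [U1 U2] := class_bound hP hl hmO hmB hnO hc.
  rewrite E in U1 U2.
  have hs := instB w1p w2p.
  split.
    apply: sup_of U1 _.
    exists 'I_7, (fun _ => 0), (betaB w1 w2), SB1, SB2.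
    by do !split => //; [exact: betaB_ge0|exact: ne0 SB1a_mem|exact: ne0 SB2a_mem].
  split.
    apply: sup_of U2 _.
    exists 'I_5, 'I_7, tailB, headB, (vtx 4 1), (vtx 4 4), (vtx 4 0), (vtx 4 3), (fun _ => 0), (betaB w1 w2).
    by do !split => //; [exact: betaB_ge0|exact: ne0 SB1a_mem|exact: ne0 SB2a_mem].
  split; first exact: hs.
  move=> x hx; rewrite -E.
  exact: (spe_bound (fun=> lexx 0) (betaB_ge0 h1 h2) hP hl hmO hmB hnO hc hx).
- move=> hw.
  have w2p : 0 < w2 by lra.
  have hP : 0 < 2 * w1 + w2 by lra.
  have hc := condC h1 h2 hw.
  have hl : 0 <= 2 * w1 + w2 by lra.
  have hnO : 0 <= 2 * (w1 + w2) by lra.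
  have E : (2 * (w1 + w2)) / (2 * w1 + w2) = 1 + w2 / (2 * w1 + w2).
    by field; apply: lt0r_neq0.
  have [U1 U2] := class_bound hP hl (lexx 0) hl hnO hc.
  rewrite E in U1 U2.
  have hs := instC h1 w2p.
  split.
    apply: sup_of U1 _.
    exists 'I_3, (fun _ => 0), (betaC w1 w2), SC1, SC2.
    by do !split => //; [exact: betaC_ge0|exact: ne0 SC1_mem|exact: ne0 SC2a_mem].
  split.
    apply: sup_of U2 _.
    exists 'I_3, 'I_3, tailC, headC, (vtx 2 0), (vtx 2 1), (vtx 2 0), (vtx 2 2), (fun _ => 0), (betaC w1 w2).
    by do !split => //; [exact: betaC_ge0|exact: ne0 SC1_mem|exact: ne0 SC2a_mem].
  split; first exact: hs.
  move=> x hx; rewrite -E.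
  exact: (spe_bound (fun=> lexx 0) (betaC_ge0 h1 h2) hP hl (lexx 0) hl hnO hc hx).
Qed.
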